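(* Let $\Sigma$ be a finite group, $A$ a difference closed pseudofield and $X\subseteq A^n$ a pseudovariety. Then every function $f\colon X\to A$ that is regular at every point of $X$ is given by a difference polynomial; that is, $\mathcal O_X(X)=A\{X\}$.
   Context: A difference ring is a commutative ring with identity with an action of $\Sigma$ by ring automorphisms. A pseudofield is an absolutely flat difference ring with no $\Sigma$-stable ideals other than $0$ and itself; it is difference closed if for every $n$ and every $\Sigma$-stable ideal $\mathfrak a$ of $R_n=A\{y_1,\dots,y_n\}$ the radical of $\mathfrak a$ equals $I(V(\mathfrak a))$. Here $A\{y_1,\dots,y_n\}$ is the polynomial ring over $A$ in indeterminates $\sigma y_i$ ($\sigma\in\Sigma$), with $\tau(\sigma y_i)=(\tau\sigma)y_i$; for $a\in A^n$, $f(a)$ is given by $\sigma y_i\mapsto\sigma(a_i)$; $V(E)=\{a\in A^n\mid f(a)=0\ \forall f\in E\}$, $I(X)=\{f\in R_n\mid f|_X=0\}$. A pseudovariety is a set $X=V(E)\subseteq A^n$; it carries the topology whose closed sets are the sets $X\cap V(E')$. $A\{X\}=R_n/I(X)$, identified with the ring of functions $X\to A$ given by difference polynomials. A function $f\colon X\to A$ is regular at $x\in X$ if there are an open $U\ni x$ in $X$ and $h,g\in R_n$ such that $g(y)$ is invertible in $A$ and $f(y)=h(y)/g(y)$ for all $y\in U$; $\mathcal O_X(U)$ is the ring of functions $U\to A$ regular at every point of $U$. *)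

(* Defs.v *)
From HB Require Import structures.
From mathcomp Require Import all_boot all_order all_algebra all_fingroup.
Set Implicit Arguments. Unset Strict Implicit. Unset Printing Implicit Defensive.
Import GRing.Theory.
Local Open Scope ring_scope.

(** Multivariate polynomials over A in k variables, as iterated
    univariate polynomials: mpoly A 0 = A, mpoly A k.+1 = {poly mpoly A k}.
    Variable number k' (the last one) of mpoly A k'.+1 is 'X. *)
Fixpoint mpoly (A : comNzRingType) (k : nat) : comNzRingType :=
  match k with
  | 0 => A
  | k'.+1 => GRing.ComNzRing.clone {poly mpoly A k'} _
  end.

Fixpoint mconst (A : comNzRingType) (k : nat) : A -> mpoly A k :=
  match k return A -> mpoly A k with
  | 0 => fun c => c
  | k'.+1 => fun c => (mconst k' c)%:P
  end.

Fixpoint mvar (A : comNzRingType) (k : nat) : 'I_k -> mpoly A k :=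
  match k return 'I_k -> mpoly A k with
  | 0 => fun j => mconst 0 0
  | k'.+1 => fun j =>
      match unlift ord_max j with
      | Some j' => (mvar A j')%:P
      | None => 'X
      end
  end.

Fixpoint meval (A B : comNzRingType) (k : nat) (phi : A -> B)
    : ('I_k -> B) -> mpoly A k -> B :=
  match k return ('I_k -> B) -> mpoly A k -> B with
  | 0 => fun _ p => phi p
  | k'.+1 => fun vals p =>
      (map_poly (meval phi (fun j : 'I_k' => vals (widen_ord (leqnSn k') j))) p)
        .[vals ord_max]
  end.

Section Diff.
Variables (gT : finGroupType) (A : comNzRingType) (act : gT -> {rmorphism A -> A}).

Definition is_diff_action : Prop :=
  (forall a, act 1%g a = a) /\ (forall s t a, act (s * t)%g a = act s (act t a)).

Definition is_ideal (R : comNzRingType) (I : R -> Prop) : Prop :=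
  [/\ I 0, (forall x y, I x -> I y -> I (x + y)) & (forall r x, I x -> I (r * x))].

Definition absolutely_flat : Prop := forall a : A, exists b : A, a = a * a * b.

Definition pseudofield : Prop :=
  absolutely_flat /\
  forall I : A -> Prop, is_ideal I -> (forall s x, I x -> I (act s x)) ->
    (forall x, I x -> x = 0) \/ (forall x, I x).

(** Difference polynomial ring R_n = A{y_1..y_n}: polynomial ring over A in
    the indeterminates sigma y_i, indexed by ('I_n * gT). *)
Definition dvarT (n : nat) : finType := ('I_n * gT)%type.
Definition dpoly (n : nat) : comNzRingType := mpoly A #|dvarT n|.

Definition dvar (n : nat) (i : 'I_n) (s : gT) : dpoly n :=
  mvar A (enum_rank ((i, s) : dvarT n)).

Definition deval (n : nat) (f : dpoly n) (a : 'I_n -> A) : A :=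
  meval (fun c : A => c)
    (fun j => let v : dvarT n := enum_val j in act v.2 (a v.1)) f.

Definition dact (n : nat) (t : gT) (f : dpoly n) : dpoly n :=
  meval (fun c : A => mconst #|dvarT n| (act t c))
    (fun j => let v : dvarT n := enum_val j in dvar v.1 (t * v.2)%g) f.

Definition sigma_stable (n : nat) (I : dpoly n -> Prop) : Prop :=
  forall t f, I f -> I (dact t f).

Definition dV (n : nat) (E : dpoly n -> Prop) (a : 'I_n -> A) : Prop :=
  forall g, E g -> deval g a = 0.

Definition dI (n : nat) (X : ('I_n -> A) -> Prop) (f : dpoly n) : Prop :=
  forall a, X a -> deval f a = 0.

Definition radical (R : comNzRingType) (I : R -> Prop) (f : R) : Prop :=
  exists k : nat, I (f ^+ k).

Definition difference_closed : Prop :=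
  forall (n : nat) (I : dpoly n -> Prop), is_ideal I -> sigma_stable I ->
    forall f, radical I f <-> dI (dV I) f.

(** Open subsets of X are
    X \ V(E'), i.e. { y in X | some e in E' has e(y) <> 0 }.  "g(y) invertible
    and f(y) = h(y)/g(y)" is written with an explicit inverse b. *)
Definition regular_at (n : nat) (E : dpoly n -> Prop)
    (f : {a : 'I_n -> A | dV E a} -> A) (x : {a : 'I_n -> A | dV E a}) : Prop :=
  exists (E' : dpoly n -> Prop) (h g : dpoly n),
    (exists e, E' e /\ deval e (proj1_sig x) <> 0) /\
    forall y : {a : 'I_n -> A | dV E a},
      (exists e, E' e /\ deval e (proj1_sig y) <> 0) ->
      exists b : A, deval g (proj1_sig y) * b = 1 /\
                    f y = deval h (proj1_sig y) * b.

End Diff.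

(* Main.v *)
Require Import Defs.
From HB Require Import structures.
From mathcomp Require Import all_boot all_order all_algebra all_fingroup.
Set Implicit Arguments. Unset Strict Implicit. Unset Printing Implicit Defensive.
Local Open Scope ring_scope.
Import GRing.Theory.

Lemma meval_rmorph (A : comNzRingType) (k : nat) :
  forall (B : comNzRingType) (phi : {rmorphism A -> B}) (vals : 'I_k -> B),
  {F : {rmorphism mpoly A k -> B} | forall p, F p = meval phi vals p}.
Proof.
elim: k => [|k IH] B phi vals.
  by exists phi.
have [F' HF'] := IH B phi (fun j : 'I_k => vals (widen_ord (leqnSn k) j)).
have cfu : commr_rmorph F' (vals ord_max) by move=> a; apply: mulrC.
exists (horner_morph cfu) => p /=.
rewrite /horner_morph; congr (_.[_]); apply: eq_map_poly => c; exact: HF'.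
Qed.

Lemma meval_ext (A B : comNzRingType) (k : nat) (phi1 phi2 : A -> B)
  (v1 v2 : 'I_k -> B) : phi1 =1 phi2 -> v1 =1 v2 -> meval phi1 v1 =1 meval phi2 v2.
Proof.
elim: k B phi1 phi2 v1 v2 => [|k IH] B phi1 phi2 v1 v2 e1 e2 p /=.
  exact: e1.
rewrite e2; congr (_.[_]); apply: eq_map_poly => c; apply: IH => // j; exact: e2.
Qed.

Lemma meval0 (A B : comNzRingType) (k : nat) (phi : A -> B) (v : 'I_k -> B) :
  phi 0 = 0 -> meval phi v 0 = 0.
Proof.
elim: k B phi v => [|k IH] B phi v h0 /=; first exact: h0.
by rewrite map_poly0 horner0.
Qed.

Lemma meval_comp (A B C : comNzRingType) (k : nat) (psi : {rmorphism B -> C})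
  (phi : A -> B) (w : 'I_k -> B) p : phi 0 = 0 ->
  psi (meval phi w p) = meval (psi \o phi) (psi \o w) p.
Proof.
elim: k B C psi phi w p => [|k IH] B C psi phi w p h0 //=.
rewrite -horner_map -map_poly_comp_id0; last exact: rmorph0.
congr (_.[_]); apply: eq_map_poly => c /=; exact: IH.
Qed.

Lemma meval_mconst (A B : comNzRingType) (k : nat) (phi : {rmorphism A -> B})
  (v : 'I_k -> B) c : meval phi v (mconst k c) = phi c.
Proof.
elim: k B phi v => [|k IH] B phi v //=.
have [F' HF'] := meval_rmorph phi (fun j : 'I_k => v (widen_ord (leqnSn k) j)).
rewrite -(eq_map_poly HF') map_polyC hornerC; exact: (etrans (HF' _) (IH _ _ _)).
Qed.

Lemma meval_mvar (A B : comNzRingType) (k : nat) (phi : {rmorphism A -> B})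
  (v : 'I_k -> B) j : meval phi v (mvar A j) = v j.
Proof.
elim: k B phi v j => [|k IH] B phi v j; first by case: j.
have [F' HF'] := meval_rmorph phi (fun j : 'I_k => v (widen_ord (leqnSn k) j)).
rewrite /=; case: unliftP => [j'|] ->.
  rewrite -(eq_map_poly HF') map_polyC hornerC.
  apply: (etrans (HF' _)); apply: (etrans (IH _ _ _ _)); congr (v _).
  by apply: val_inj; rewrite /= /bump leqNgt ltn_ord.
by rewrite -(eq_map_poly HF') map_polyX hornerX.
Qed.

Lemma mconst0 (A : comNzRingType) k : mconst k (0 : A) = 0.
Proof. by elim: k => //= k ->. Qed.

Section D.
Variables (gT : finGroupType) (A : comNzRingType) (act : gT -> {rmorphism A -> A}).
Hypothesis Hact : is_diff_action act.

Lemma deval_rm n (a : 'I_n -> A) :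
  {F : {rmorphism dpoly gT A n -> A} | forall p, F p = deval act p a}.
Proof.
have [F HF] := meval_rmorph (idfun : {rmorphism A -> A})
   (fun j : 'I_#|dvarT gT n| => let v : dvarT gT n := enum_val j in act v.2 (a v.1)).
by exists F.
Qed.

Lemma deval_dact n t (p : dpoly gT A n) a :
  deval act (dact act t p) a = act t (deval act p a).
Proof.
have [F HF] := deval_rm a.
rewrite /dact -HF meval_comp; last by rewrite rmorph0 mconst0.
rewrite /deval (meval_comp (act t)) //.
apply: meval_ext => [c|j] /=.
  rewrite HF /deval.
  exact: (meval_mconst (idfun : {rmorphism A -> A})).
rewrite HF /deval /dvar.
rewrite (meval_mvar (idfun : {rmorphism A -> A})) /= enum_rankK /=.
by case: Hact => _ ->.
Qed.

Lemma devalD n (p q : dpoly gT A n) a : deval act (p + q) a = deval act p a + deval act q a.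
Proof. by have [F HF] := deval_rm a; rewrite -!HF rmorphD. Qed.
Lemma devalM n (p q : dpoly gT A n) a : deval act (p * q) a = deval act p a * deval act q a.
Proof. by have [F HF] := deval_rm a; rewrite -!HF rmorphM. Qed.
Lemma deval1 n a : deval act (1 : dpoly gT A n) a = 1.
Proof. by have [F HF] := deval_rm a; rewrite -!HF rmorph1. Qed.
Lemma deval0 n a : deval act (0 : dpoly gT A n) a = 0.
Proof. by have [F HF] := deval_rm a; rewrite -!HF rmorph0. Qed.
Lemma deval_prod n (P : pred gT) (G : gT -> dpoly gT A n) a :
  deval act (\prod_(s | P s) G s) a = \prod_(s | P s) deval act (G s) a.
Proof. by have [F HF] := deval_rm a; rewrite -HF rmorph_prod; apply: eq_bigr => s _; rewrite HF. Qed.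
End D.

Lemma ring5 (R : comNzRingType) (x y u v w : R) :
  x * (y * u * v * w) = x * (y * w) * (u * v).
Proof.
by rewrite -!mulrA [w * _]mulrC -!mulrA.
Qed.

Theorem theorem4p30 (gT : finGroupType) (A : comNzRingType)
    (act : gT -> {rmorphism A -> A}) (n : nat) (E : dpoly gT A n -> Prop) :
  is_diff_action act -> pseudofield act -> difference_closed act ->
  forall f : {a : 'I_n -> A | dV act E a} -> A,
    (forall x, regular_at f x) <->
    (exists h : dpoly gT A n, forall x, f x = deval act h (proj1_sig x)).
Proof.
move=> Hact _ Hdc f; split; last first.
  move=> [h Hh] x; exists (fun e => e = 1), h, 1; split.
    by exists 1; split => //; rewrite deval1; apply/eqP; exact: oner_neq0.
  by move=> y _; exists 1; rewrite deval1 mulr1 Hh mulr1.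
move=> Hreg.
have [Hact1 HactM] := Hact.
pose P (p : dpoly gT A n) := forall t : gT, exists q : dpoly gT A n,
  forall z : {a : 'I_n -> A | dV act E a},
    act t (deval act p (proj1_sig z)) * f z = deval act q (proj1_sig z).
have HI : is_ideal P.
  split.
  - move=> t; exists 0 => z; by rewrite (deval0 act) rmorph0 mul0r.
  - move=> x y Hx Hy t; have [qx Hqx] := Hx t; have [qy Hqy] := Hy t.
    exists (qx + qy) => z; by rewrite devalD rmorphD mulrDl Hqx Hqy devalD.
  - move=> r x Hx t; have [qx Hqx] := Hx t.
    exists (dact act t r * qx) => z.
    by rewrite devalM rmorphM -mulrA Hqx devalM (deval_dact Hact).
have HS : sigma_stable act P.
  move=> s p Hp t; have [q Hq] := Hp (t * s)%g.
  exists q => z; by rewrite (deval_dact Hact) -HactM.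
have : radical P 1.
  apply/(Hdc n P HI HS) => a HaP.
  exfalso.
  have HaE : dV act E a.
    move=> g Hg; apply: HaP => t; exists 0 => z.
    by rewrite (proj2_sig z g Hg) rmorph0 mul0r (deval0 act).
  have [E' [h [g [[e [He' Hex]] Hy]]]] := Hreg (exist _ a HaE).
  have [b [Hgb _]] := Hy (exist _ a HaE) (ex_intro _ e (conj He' Hex)).
  pose N := \prod_(s : gT) dact act s g.
  pose M := \prod_(s : gT | s != 1%g) dact act s g.
  have HN : forall y, deval act N y = deval act g y * deval act M y.
    move=> y; rewrite /N /M !deval_prod (bigD1 1%g) //= (deval_dact Hact).
    by rewrite Hact1.
  have HPp : P (e * N).
    move=> t; exists (dact act t e * M * h) => z.
    rewrite !devalM (deval_dact Hact) rmorphM.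
    have [Hz0|Hz0] := eqVneq (deval act e (proj1_sig z)) 0.
      by rewrite Hz0 rmorph0 !mul0r.
    have [bz [Hgz Hfz]] := Hy z (ex_intro _ e (conj He' (fun E0 => negP Hz0 (introT eqP E0)))).
    have -> : act t (deval act N (proj1_sig z)) = deval act N (proj1_sig z).
      rewrite /N !deval_prod rmorph_prod.
      under eq_bigr => s _ do rewrite (deval_dact Hact) -HactM.
      under [in RHS]eq_bigr => s _ do rewrite (deval_dact Hact).
      by rewrite [RHS](reindex_inj (mulgI t)).
    rewrite HN Hfz.
    rewrite -!mulrA; congr (_ * _).
    rewrite [deval act g _ * _]mulrC -!mulrA; congr (_ * _).
    by rewrite [bz * _]mulrC Hgz mulr1.
  have := HaP _ HPp; rewrite devalM HN.
  move=> H0; apply: Hex.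
  have Hunit : deval act g a * b * (\prod_(s | s != 1%g) act s b) * deval act M a = 1.
    rewrite Hgb mul1r /M deval_prod -big_split /=.
    rewrite big1 // => s _; by rewrite (deval_dact Hact) -rmorphM mulrC Hgb rmorph1.
  by rewrite -[LHS]mulr1 -Hunit ring5 H0 mul0r.
case=> k; rewrite expr1n => H1.
have [q Hq] := H1 1%g.
exists q => z; by rewrite -Hq deval1 rmorph1 mul1r.
Qed.
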